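(* Consider the Markov-chain trace semantics of an APPL program $\langle\mathcal{D},S_{\mathsf{main}}\rangle$ with stopping time $T$, fix $m\in\mathbb{N}$, and let $\psi:\Sigma\to\mathcal{M}_{\mathcal{R}}^{(m)}$ be an expected-potential function for upper bounds on stopping time, where $\mathcal{R}=([0,\infty],\le,+,\cdot,0,1)$. Let $A_n(\omega)=\langle n^k\rangle_{0\le k\le m}$, $A_T(\omega)=A_{T(\omega)}(\omega)=\langle T(\omega)^k\rangle_{0\le k\le m}$ and $\Psi_0(\omega)=\psi(\omega_0)$. Then $\mathbb{E}[A_T]\sqsubseteq\mathbb{E}[\Psi_0]$.
   Context: APPL: fix finite sets $\mathsf{VID}$ (real-valued program variables) and $\mathsf{FID}$. Expressions $E::=x\mid c\mid E_1+E_2\mid E_1*E_2$; conditions $L::=\mathsf{true}\mid\neg L\mid L_1\wedge L_2\mid E_1\le E_2$; distributions $D$ with probability measures $\mu_D$ on $\mathbb{R}$; statements $S::=\mathsf{skip}\mid\mathsf{tick}(c)\mid x:=E\mid x\sim D\mid\mathsf{call}\ f\mid\mathsf{while}\ L\ \mathsf{do}\ S\mid\mathsf{if}\ \mathsf{prob}(p)\ \mathsf{then}\ S_1\ \mathsf{else}\ S_2\mid\mathsf{if}\ L\ \mathsf{then}\ S_1\ \mathsf{else}\ S_2\mid S_1;S_2$; program $\langle\mathcal{D},S_{\mathsf{main}}\rangle$ with $\mathcal{D}:\mathsf{FID}\to$ statements. Continuations $K::=\mathsf{Kstop}\mid\mathsf{Kloop}(L,S,K)\mid\mathsf{Kseq}(S,K)$.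 Configurations $\sigma=\langle\gamma,S,K,\alpha\rangle$, $\gamma:\mathsf{VID}\to\mathbb{R}$, $\alpha\in\mathbb{R}$; $\Sigma$ the measurable space of configurations. One-step kernel $\mapsto$: $\langle\gamma,\mathsf{skip},\mathsf{Kstop},\alpha\rangle\mapsto\delta(\text{itself})$; $\langle\gamma,\mathsf{skip},\mathsf{Kloop}(L,S,K),\alpha\rangle\mapsto\delta(\langle\gamma,S,\mathsf{Kloop}(L,S,K),\alpha\rangle)$ if $\gamma(L)$ true else $\delta(\langle\gamma,\mathsf{skip},K,\alpha\rangle)$; $\langle\gamma,\mathsf{skip},\mathsf{Kseq}(S,K),\alpha\rangle\mapsto\delta(\langle\gamma,S,K,\alpha\rangle)$; $\mathsf{tick}(c)$: $\delta(\langle\gamma,\mathsf{skip},K,\alpha+c\rangle)$; $x:=E$: $\delta(\langle\gamma[x\mapsto\gamma(E)],\mathsf{skip},K,\alpha\rangle)$; $x\sim D$: law of $\langle\gamma[x\mapsto r],\mathsf{skip},K,\alpha\rangle$, $r\sim\mu_D$; $\mathsf{call}\ f$: $\delta(\langle\gamma,\mathcal{D}(f),K,\alpha\rangle)$; probabilistic branch: $p\,\delta(\langle\gamma,S_1,K,\alpha\rangle)+(1-p)\,\delta(\langle\gamma,S_2,K,\alpha\rangle)$; conditional according to $\gamma(L)$; $\mathsf{while}\ L\ \mathsf{do}\ S$: $\delta(\langle\gamma,\mathsf{skip},\mathsf{Kloop}(L,S,K),\alpha\rangle)$; $S_1;S_2$: $\delta(\langle\gamma,S_1,\mathsf{Kseq}(S_2,K),\alpha\rangle)$.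 $\Omega=\Sigma^{\mathbb{Z}_{\ge0}}$ with $\mathbb{P}$ the law of the Markov chain started at $\langle\lambda\_.0,S_{\mathsf{main}},\mathsf{Kstop},0\rangle$ with kernel $\mapsto$; $T(\omega)=\inf\{n:\omega_n=\langle\_,\mathsf{skip},\mathsf{Kstop},\_\rangle\}\in\mathbb{Z}_{\ge0}\cup\{\infty\}$. $\mathcal{M}_{\mathcal{R}}^{(m)}$ is the set of vectors $\langle u_k\rangle_{0\le k\le m}$ over $[0,\infty]$ with pointwise $\oplus$, $\langle u_k\rangle\otimes\langle v_k\rangle=\langle\sum_{i=0}^k\binom{k}{i}u_iv_{k-i}\rangle_{0\le k\le m}$, $\underline{1}=\langle1,0,\dots,0\rangle$, and pointwise order $\sqsubseteq$; expectations are componentwise. A (measurable) map $\psi:\Sigma\to\mathcal{M}_{\mathcal{R}}^{(m)}$ is an expected-potential function for upper bounds on stopping time if (i) $\psi(\sigma)_0=1$ for all $\sigma$, (ii) $\psi(\sigma)=\underline{1}$ if $\sigma=\langle\_,\mathsf{skip},\mathsf{Kstop},\_\rangle$, and (iii) $\psi(\sigma)\sqsupseteq\mathbb{E}_{\sigma'\sim{\mapsto}(\sigma)}[\langle1,1,\dots,1\rangle\otimes\psi(\sigma')]$ for every non-terminating configuration $\sigma$. *)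

(* Defs.v *)
From HB Require Import structures.
From mathcomp Require Import all_boot all_order all_algebra.
From mathcomp Require Import all_classical all_reals all_analysis.
From mathcomp Require Import measurable_realfun lebesgue_measure lebesgue_integral probability.
Set Implicit Arguments.
Unset Strict Implicit.
Unset Printing Implicit Defensive.
Import Order.TTheory GRing.Theory Num.Theory.
Local Open Scope classical_set_scope.
Local Open Scope ring_scope.

(* VID : program variables, FID : function identifiers,               *)
(* Dst : distribution identifiers (interpreted by mu_D : Dst -> prob.)*)
Section Syntax.
Variables (R : realType) (VID FID Dst : Type).

Inductive Expr :=
| EVar of VID
| EConst of R
| EAdd of Expr & Expr
| EMul of Expr & Expr.

Inductive Cond :=
| LTrue
| LNot of Cond
| LAnd of Cond & Cond
| LLe of Expr & Expr.

Inductive Stmt :=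
| Sskip
| Stick of R
| Sassign of VID & Expr
| Ssample of VID & Dst
| Scall of FID
| Swhile of Cond & Stmt
| Sprob (p : R) of (0 <= p <= 1) & Stmt & Stmt
| Sif of Cond & Stmt & Stmt
| Sseq of Stmt & Stmt.

Inductive Kont :=
| Kstop
| Kloop of Cond & Stmt & Kont
| Kseq of Stmt & Kont.

Fixpoint evalE (g : VID -> R) (e : Expr) : R :=
  match e with
  | EVar x => g x
  | EConst c => c
  | EAdd e1 e2 => evalE g e1 + evalE g e2
  | EMul e1 e2 => evalE g e1 * evalE g e2
  end.

Fixpoint evalL (g : VID -> R) (l : Cond) : bool :=
  match l with
  | LTrue => true
  | LNot l => ~~ evalL g l
  | LAnd l1 l2 => evalL g l1 && evalL g l2
  | LLe e1 e2 => evalE g e1 <= evalE g e2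
  end.

Record Conf := mkConf { cgam : VID -> R; cstm : Stmt; ckont : Kont; ccost : R }.

End Syntax.

Arguments Sskip {R VID FID Dst}.
Arguments Kstop {R VID FID Dst}.

HB.instance Definition _ (R : realType) (VID FID Dst : Type) :=
  gen_eqMixin (Conf R VID FID Dst).
HB.instance Definition _ (R : realType) (VID FID Dst : Type) :=
  gen_choiceMixin (Conf R VID FID Dst).
Definition conf_point (R : realType) (VID FID Dst : Type) : Conf R VID FID Dst :=
  mkConf (fun _ => 0%R) Sskip Kstop 0%R.
HB.instance Definition _ (R : realType) (VID FID Dst : Type) :=
  isPointed.Build (Conf R VID FID Dst) (conf_point R VID FID Dst).

Section Semantics.
Variables (R : realType) (VID : eqType) (FID Dst : Type).
Local Notation Conf := (Conf R VID FID Dst).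

Definition upd (g : VID -> R) (x : VID) (r : R) : VID -> R :=
  fun y => if y == x then r else g y.

Definition init_conf (Smain : Stmt R VID FID Dst) : Conf :=
  mkConf (fun _ => 0) Smain Kstop 0.


(* The measurable space Sigma of configurations: discrete on the syntactic
   part (S, K), Borel on each gamma(x) and on alpha. *)
Definition conf_gen : set (set Conf) :=
  [set A | exists SK : set (Stmt R VID FID Dst * Kont R VID FID Dst),
             A = [set s | SK (cstm s, ckont s)]]
  `|` [set A | exists x (B : set R), measurable B /\ A = [set s | B (cgam s x)]]
  `|` [set A | exists B : set R, measurable B /\ A = [set s | B (ccost s)]].

Definition Sigma := g_sigma_algebraType conf_gen.

Definition path_gen : set (set (nat -> Sigma)) :=
  [set C | exists n (A : set Sigma), measurable A /\ C = [set w | A (w n)]].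

Definition Omega := g_sigma_algebraType path_gen.

Definition terminal (s : Conf) : bool :=
  match cstm s, ckont s with Sskip, Kstop => true | _, _ => false end.

Local Open Scope ereal_scope.

(* Expectation E_{s' ~ |->(s)} [f s'] of f : Sigma -> \bar R under the
   one-step kernel |->, written out case by case (Dirac, two-point mixture,
   pushforward of mu_D). *)
Definition stepE (D : FID -> Stmt R VID FID Dst)
    (muD : Dst -> probability R R) (s : Sigma) (f : Sigma -> \bar R) : \bar R :=
  let: mkConf g St Kt a := s in
  match St with
  | Sskip =>
      match Kt with
      | Kstop => f s
      | Kloop L S' Kt' =>
          if evalL g L then f (mkConf g S' (Kloop L S' Kt') a)
          else f (mkConf g Sskip Kt' a)
      | Kseq S' Kt' => f (mkConf g S' Kt' a)
      end
  | Stick c => f (mkConf g Sskip Kt (a + c)%R)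
  | Sassign x e => f (mkConf (upd g x (evalE g e)) Sskip Kt a)
  | Ssample x d => \int[muD d]_r f (mkConf (upd g x r) Sskip Kt a)
  | Scall h => f (mkConf g (D h) Kt a)
  | Swhile L S' => f (mkConf g Sskip (Kloop L S' Kt) a)
  | Sprob p _ S1 S2 =>
      p%:E * f (mkConf g S1 Kt a) + (1 - p)%R%:E * f (mkConf g S2 Kt a)
  | Sif L S1 S2 =>
      if evalL g L then f (mkConf g S1 Kt a) else f (mkConf g S2 Kt a)
  | Sseq S1 S2 => f (mkConf g S1 (Kseq S2 Kt) a)
  end.

(* The moment semiring M_R^(m) over R = [0,oo]: vectors <u_k>_{0<=k<=m},
   represented as functions nat -> \bar R of which only indices k <= m
   are meaningful. *)
Definition mones : nat -> \bar R := fun _ => 1.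
Definition munit : nat -> \bar R := fun k => if k == 0%N then 1 else 0.
Definition motimes (u v : nat -> \bar R) : nat -> \bar R :=
  fun k => \sum_(i < k.+1) ('C(k, i))%:R%:E * (u i * v (k - i)%N).
Definition mle (m : nat) (u v : nat -> \bar R) : Prop :=
  forall k, (k <= m)%N -> u k <= v k.

Definition expected_potential_ub (D : FID -> Stmt R VID FID Dst)
    (muD : Dst -> probability R R) (m : nat) (psi : Sigma -> nat -> \bar R) :
    Prop :=
  [/\ (forall k, (k <= m)%N -> measurable_fun setT (fun s : Sigma => psi s k)),
      (forall s k, (k <= m)%N -> 0 <= psi s k),
      (forall s, psi s 0%N = 1),
      (forall s, terminal s ->
                     forall k, (k <= m)%N -> psi s k = munit k) &
      (forall s, ~~ terminal s ->
                     mle m (fun k => stepE D muD s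
                                       (fun s' => motimes mones (psi s') k))
                           (psi s))].

(* P is the law on Omega of the Markov chain with kernel |-> started at
   <\_.0, Smain, Kstop, 0>: its finite-dimensional distributions are the
   ones of the chain (initial law Dirac, transitions given by |->). *)
Definition markov_law (D : FID -> Stmt R VID FID Dst)
    (muD : Dst -> probability R R) (Smain : Stmt R VID FID Dst)
    (P : probability Omega R) : Prop :=
  [/\ (forall A : set Sigma, measurable A ->
     P [set w : Omega | A (w 0%N)] = (\1_A (init_conf Smain : Sigma))%:E) &
  (forall (n : nat) (A : nat -> set Sigma) (B : set Sigma),
     (forall i, measurable (A i)) -> measurable B ->
     P [set w : Omega | (forall i, (i <= n)%N -> A i (w i)) /\ B (w n.+1)] =
     \int[P]_(w in [set w : Omega | forall i, (i <= n)%N -> A i (w i)])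
        stepE D muD (w n) (fun s => (\1_B s)%:E))].

Definition stopT (w : Omega) : \bar R :=
  ereal_inf [set (n%:R)%:E | n in [set n | terminal (w n)]].

End Semantics.

(* Main.v *)
Require Import Defs.
From HB Require Import structures.
From mathcomp Require Import all_boot all_order all_algebra.
From mathcomp Require Import all_classical all_reals all_analysis.
From mathcomp Require Import measurable_realfun lebesgue_measure lebesgue_integral probability.
Import Order.TTheory GRing.Theory Num.Theory.
From mathcomp Require Import ring zify.
Lemma binA k j r : 'C(k, j) * 'C(k - j, r) = 'C(k, r) * 'C(k - r, j).
Proof.
case: (leqP (j + r) k) => h.
  apply/eqP; rewrite -(@eqn_pmul2r (j`! * r`! * (k - j - r)`!)); last by rewrite !muln_gt0 !fact_gt0.
  have e1 : 'C(k, j) * 'C(k - j, r) * (j`! * r`! * (k - j - r)`!) =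
            'C(k, j) * (j`! * ('C(k - j, r) * (r`! * (k - j - r)`!))) by ring.
  have e2 : 'C(k, r) * 'C(k - r, j) * (j`! * r`! * (k - j - r)`!) =
            'C(k, r) * (r`! * ('C(k - r, j) * (j`! * (k - r - j)`!))).
    by rewrite (subnAC k j r); ring.
  rewrite e1 e2 (@bin_fact (k - j) r); last lia.
  rewrite (@bin_fact (k - r) j); last lia.
  rewrite (@bin_fact k j); last lia.
  by rewrite (@bin_fact k r) //; lia.
case: (leqP j k) => hj.
  rewrite (@bin_small (k - j) r); last lia.
  case: (leqP r k) => hr; last by rewrite muln0 (@bin_small k r).
  by rewrite muln0 (@bin_small (k - r) j) ?muln0 //; lia.
rewrite (@bin_small k j) // mul0n.
case: (leqP r k) => hr; last by rewrite (@bin_small k r).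
by rewrite (@bin_small (k - r) j) ?muln0 //; lia.
Qed.
Lemma natid k n r : r <= k ->
  \sum_(j < k.+1) 'C(k, j) * n ^ j * 'C(k - j, r) = 'C(k, r) * n.+1 ^ (k - r).
Proof.
move=> rk.
transitivity (\sum_(j < k.+1) 'C(k, r) * ('C(k - r, j) * n ^ j)).
  by apply: eq_bigr => j _; rewrite mulnAC binA mulnA.
rewrite -big_distrr /=; congr (_ * _).
rewrite -[n.+1]add1n expnDn.
rewrite (big_ord_widen k.+1 (fun i => 'C(k - r, i) * (1 ^ (k - r - i) * n ^ i))); last by rewrite ltnS leq_subr.
rewrite [RHS]big_mkcond; apply: eq_bigr => j _; case: ifP => h.
  by rewrite exp1n mul1n.
by rewrite bin_small ?mul0n // ltnNge -ltnS h.
Qed.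
Local Open Scope classical_set_scope.
Local Open Scope ring_scope.
Local Open Scope ereal_scope.
Section Bin.
Variable R : realType.
Definition M (t : nat) (v : nat -> \bar R) (k : nat) : \bar R :=
  \sum_(i < k.+1) (('C(k, i) * t ^ i)%:R)%:E * v (k - i)%N.

Lemma sum_rev (N : nat) (F : nat -> \bar R) :
  \sum_(i < N.+1) F i = \sum_(i < N.+1) F (N - i)%N.
Proof.
transitivity (\sum_(0 <= i < N.+1) F i); first by rewrite big_mkord.
by rewrite big_rev_mkord subn0; apply: eq_bigr => i _; rewrite subSS.
Qed.

Lemma sum_widen0 (a b : nat) (F : nat -> \bar R) : (a <= b)%N ->
  (forall i, (a <= i)%N -> (i < b)%N -> F i = 0) ->
  \sum_(i < a) F i = \sum_(i < b) F i.
Proof.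
move=> ab F0; rewrite (big_ord_widen b F ab) big_mkcond /=.
apply: eq_bigr => i _; case: ifP => // /negbT; rewrite -leqNgt => h.
by rewrite F0.
Qed.

Lemma Mstep n k v : (forall q, (q <= k)%N -> 0 <= v q) ->
  M n.+1 v k = \sum_(j < k.+1) (('C(k, j) * n ^ j)%:R)%:E * motimes (mones R) v (k - j)%N.
Proof.
move=> v0.
have LHS : M n.+1 v k = \sum_(r < k.+1) (('C(k, r) * n.+1 ^ (k - r))%:R)%:E * v r.
  rewrite /M (sum_rev k (fun i => (('C(k, i) * n.+1 ^ i)%:R)%:E * v (k - i)%N)).
  apply: eq_bigr => r _.
  have rk : (r <= k)%N by rewrite -ltnS.
  by rewrite bin_sub // subKn.
have inner j : (j <= k)%N -> motimes (mones R) v (k - j)%N =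
    \sum_(r < k.+1) ('C(k - j, r)%:R)%:E * v r.
  move=> jk; rewrite /motimes /mones.
  rewrite (sum_rev (k - j) (fun i => ('C(k - j, i)%:R)%:E * (1 * v (k - j - i)%N))).
  transitivity (\sum_(i < (k - j).+1) ('C(k - j, i)%:R)%:E * v i).
    apply: eq_bigr => r _.
    have rk : (r <= k - j)%N by rewrite -ltnS.
    by rewrite mul1e bin_sub // subKn.
  apply: (@sum_widen0 (k - j).+1 k.+1 (fun r => ('C(k - j, r)%:R)%:E * v r)).
  - by rewrite ltnS leq_subr.
  - by move=> i hi _; rewrite bin_small ?mul0e.
rewrite LHS.
transitivity (\sum_(j < k.+1) \sum_(r < k.+1)
    (('C(k, j) * n ^ j * 'C(k - j, r))%:R)%:E * v r).
  rewrite exchange_big /=; apply: eq_bigr => r _.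
  have rk : (r <= k)%N by rewrite -ltnS.
  rewrite -natid // natr_sum -sumEFin ge0_sume_distrl //.
apply: eq_bigr => j _.
have jk : (j <= k)%N by rewrite -ltnS.
rewrite inner // ge0_sume_distrr; last first.
  by move=> r _; apply: mule_ge0; [rewrite lee_fin|apply: v0; rewrite -ltnS].
by apply: eq_bigr => r _; rewrite muleA -EFinM -natrM.
Qed.
End Bin.
Arguments M {R}.
Section NM.
Context d (T : measurableType d) (R : realType) (mu : {measure set T -> \bar R}).
Import HBNNSimple.

Lemma nm_le_integral (A : set T) (f1 f2 : T -> \bar R) :
  (forall x, A x -> 0 <= f1 x) -> (forall x, A x -> f1 x <= f2 x) ->
  \int[mu]_(x in A) f1 x <= \int[mu]_(x in A) f2 x.
Proof.
move=> f10 f12.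
have f20 x : A x -> 0 <= f2 x by move=> Ax; exact: le_trans (f10 _ Ax) (f12 _ Ax).
rewrite !ge0_integralE //; apply: ereal_sup_le => _ [h hf <-]; exists h => // x.
apply: le_trans (hf x) _; rewrite /patch; case: ifP => // /set_mem Ax; exact: f12.
Qed.

Lemma nm_integralZ (A : set T) (c : R) f : (0 <= c)%R -> (forall x, A x -> 0 <= f x) ->
  c%:E * \int[mu]_(x in A) f x <= \int[mu]_(x in A) (c%:E * f x).
Proof.
move=> c0 f0; move: c0; rewrite le_eqVlt => /predU1P[<-|cpos].
  by rewrite mul0e; apply: integral_ge0 => x Ax; rewrite mul0e.
have cf0 x : A x -> 0 <= c%:E * f x.
  by move=> Ax; apply: mule_ge0; [rewrite lee_fin ltW|exact: f0].
rewrite !ge0_integralE //.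
rewrite -ereal_sup_pZl //; apply: ereal_sup_le => _ [_ [h hf <-] <-].
exists (scale_nnsfun h (ltW cpos)); last exact: sintegralrM.
move=> x; have := hf x; rewrite /patch; case: ifP => _ /= hx; rewrite EFinM.
  by apply: lee_wpmul2l => //; rewrite lee_fin ltW.
apply: (@le_trans _ _ (c%:E * 0)).
  by apply: lee_wpmul2l => //; rewrite lee_fin ltW.
by rewrite mule0.
Qed.

Lemma esup_add (A B : set (\bar R)) M : A !=set0 -> B !=set0 ->
  (forall a, A a -> 0 <= a) -> (forall b, B b -> 0 <= b) ->
  (forall a b, A a -> B b -> a + b <= M) -> ereal_sup A + ereal_sup B <= M.
Proof.
move=> [a0 Aa0] [b0 Bb0] A0 B0 AB.
have M0 : 0 <= M.
  by apply: le_trans (AB _ _ Aa0 Bb0); apply: adde_ge0; [exact: A0|exact: B0].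
have [Minf|Mfin] : M = +oo \/ M \is a fin_num.
  by move: M0; case: (M) => [r|_|] //; [right|left].
  by rewrite Minf leey.
have finB b : B b -> b \is a fin_num.
  move=> Bb; rewrite ge0_fin_numE ?B0 //.
  apply: (le_lt_trans (lee_paddl (A0 _ Aa0) (lexx b))).
  by apply: le_lt_trans (AB _ _ Aa0 Bb) _; rewrite -(fineK Mfin) ltry.
have supA_le b : B b -> ereal_sup A <= M - b.
  move=> Bb; apply: ge_ereal_sup => a Aa; rewrite leeBrDr ?finB //; exact: AB.
have finA : ereal_sup A \is a fin_num.
  rewrite ge0_fin_numE; last first.
    by apply: le_trans (A0 _ Aa0) (ereal_sup_ubound Aa0).
  apply: le_lt_trans (supA_le _ Bb0) _.
  by rewrite -(fineK Mfin) -(fineK (finB _ Bb0)) -EFinB ltry.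
have : ereal_sup B <= M - ereal_sup A.
  apply: ge_ereal_sup => b Bb; rewrite leeBrDl // -leeBrDr ?finB //.
  exact: supA_le.
by rewrite leeBrDl.
Qed.

Lemma nm_integralD (A : set T) f g :
  (forall x, A x -> 0 <= f x) -> (forall x, A x -> 0 <= g x) ->
  \int[mu]_(x in A) f x + \int[mu]_(x in A) g x <= \int[mu]_(x in A) (f x + g x).
Proof.
move=> f0 g0.
have fg0 x : A x -> 0 <= f x + g x.
  by move=> Ax; apply: adde_ge0; [exact: f0|exact: g0].
rewrite !ge0_integralE //.
apply: esup_add.
- exists (sintegral mu nnsfun0); exists nnsfun0 => // x /=.
  exact: erestrict_ge0.
- exists (sintegral mu nnsfun0); exists nnsfun0 => // x /=.
  exact: erestrict_ge0.
- by move=> _ [h _ <-]; exact: sintegral_ge0.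
- by move=> _ [h _ <-]; exact: sintegral_ge0.
move=> _ _ [h1 h1f <-] [h2 h2f <-]; rewrite -sintegralD.
apply: ereal_sup_ubound; exists (add_nnsfun h1 h2) => // x.
have := h1f x; have := h2f x; rewrite /patch; case: ifP => _ /= h2x h1x.
  by rewrite EFinD; exact: leeD.
have p0 : (point : \bar R) = 0 by []. by rewrite p0 in h1x h2x *; rewrite EFinD -(adde0 0); exact: leeD.
Qed.
End NM.
Lemma indic_ge0 (R : realType) (T : Type) (A : set T) (x : T) : (0 <= (\1_A x : R))%R.
Proof. by rewrite indicE; case: (x \in A). Qed.

Lemma pinfty_pow (R : realType) k : (+oo : \bar R) ^+ k.+1 = +oo.
Proof. elim: k => [//|k IH]; by rewrite expeS IH mulyy. Qed.

Section P.
Import HBNNSimple.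
Variables (R : realType) (VID FID : finType) (Dst : Type).
Variable (muD : Dst -> probability R R).
Variable (D : FID -> Stmt R VID FID Dst).
Local Notation Sig := (Sigma R VID FID Dst).
Local Notation Om := (Omega R VID FID Dst).

Lemma mconst_set d (T : measurableType d) (P : Prop) : measurable [set _ : T | P].
Proof.
case: (pselect P) => p.
  by rewrite (_ : [set _ | P] = setT) //; apply/seteqP; split.
by rewrite (_ : [set _ | P] = set0) //; apply/seteqP; split.
Qed.

Lemma mSig_gen (A : set Sig) : conf_gen A -> measurable A.
Proof. by move=> h; exact: sub_sigma_algebra. Qed.

Lemma mproj n : measurable_fun [set: Om] (fun w : Om => (w n : Sig)).
Proof.
move=> _ A mA; rewrite setTI; apply: sub_sigma_algebra; exists n, A; split=> //.
Qed.

Lemma mterm : measurable [set s : Sig | terminal s].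
Proof.
apply: mSig_gen; left; left.
exists [set p | terminal (mkConf (fun _ => 0%R) p.1 p.2 0%R : Conf R VID FID Dst)].
by apply/seteqP; split => -[].
Qed.

Lemma mconf (g : VID -> R) (x : VID) S K (a : R) :
  measurable_fun [set: R] (fun r => (mkConf (upd g x r) S K a : Sig)).
Proof.
apply: (@measurability _ _ R Sig setT _ (@conf_gen R VID FID Dst)) => //.
move=> _ [B [[[SK ->]|[y [B' [mB' ->]]]]|[B' [mB' ->]]] <-]; rewrite setTI /=.
- rewrite /preimage /=; exact: mconst_set.
- rewrite /upd /preimage /=; case: (y =P x) => _; [exact: mB'|exact: mconst_set].
- rewrite /preimage /=; exact: mconst_set.
Qed.

Local Notation stepE := (stepE D muD).

Lemma stepE_cases (s : Sig) :
  (exists t : Sig, forall f, stepE s f = f t) \/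
  (exists (p : R) (t1 t2 : Sig), (0 <= p <= 1)%R /\
     forall f, stepE s f = p%:E * f t1 + (1 - p)%:E * f t2) \/
  (exists d g x K a, forall f,
     stepE s f = \int[muD d]_r f (mkConf (upd g x r) Sskip K a : Sig)).
Proof.
case: s => g [|c|x e|x d|h|L S'|p hp S1 S2|L S1 S2|S1 S2] K a.
- case: K => [|L S' K|S' K].
  + by left; eexists.
  + left; case E: (evalL g L); eexists => f /=; rewrite E; reflexivity.
  + by left; eexists.
- by left; eexists.
- by left; eexists.
- by right; right; do 5 eexists.
- by left; eexists.
- by left; eexists.
- by right; left; do 3 eexists; split; [exact: hp|].
- left; case E: (evalL g L); eexists => f /=; rewrite E; reflexivity.
- by left; eexists.
Qed.

Lemma stepE_ge0 (s : Sig) f : (forall y, 0 <= f y) -> 0 <= stepE s f.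
Proof.
move=> f0; case: (stepE_cases s) => [[t E]|[[p [t1 [t2 [/andP[p0 p1] E]]]]|[d [g [x [K [a E]]]]]]]; rewrite !E.
- exact: f0.
- by apply: adde_ge0; apply: mule_ge0 => //; rewrite lee_fin ?subr_ge0.
- by apply: integral_ge0 => r _; exact: f0.
Qed.

Lemma stepE_add (s : Sig) f h : (forall y, 0 <= f y) -> (forall y, 0 <= h y) ->
  measurable_fun setT f -> measurable_fun setT h ->
  stepE s (fun y => f y + h y) = stepE s f + stepE s h.
Proof.
move=> f0 h0 mf mh.
case: (stepE_cases s) => [[t E]|[[p [t1 [t2 [/andP[p0 p1] E]]]]|[d [g [x [K [a E]]]]]]]; rewrite !E.
- by [].
- by rewrite !ge0_muleDr // addeACA.
- rewrite ge0_integralD //.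
  + exact: measurableT_comp mf (mconf _ _ _ _ _).
  + exact: measurableT_comp mh (mconf _ _ _ _ _).
Qed.

Lemma stepE_scale (s : Sig) (c : R) f : (0 <= c)%R -> (forall y, 0 <= f y) ->
  measurable_fun setT f ->
  stepE s (fun y => c%:E * f y) = c%:E * stepE s f.
Proof.
move=> c0 f0 mf.
case: (stepE_cases s) => [[t E]|[[p [t1 [t2 [/andP[p0 p1] E]]]]|[d [g [x [K [a E]]]]]]]; rewrite !E.
- by [].
- rewrite ge0_muleDr; last 2 first.
    by apply: mule_ge0.
    by apply: mule_ge0 => //; rewrite lee_fin subr_ge0.
  by rewrite !(muleCA c%:E).
- rewrite ge0_integralZl_EFin //.
  exact: measurableT_comp mf (mconf _ _ _ _ _).
Qed.

Lemma stepE_le (s : Sig) f h : (forall y, 0 <= f y) -> (forall y, f y <= h y) ->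
  measurable_fun setT f -> measurable_fun setT h ->
  stepE s f <= stepE s h.
Proof.
move=> f0 fh mf mh.
case: (stepE_cases s) => [[t E]|[[p [t1 [t2 [/andP[p0 p1] E]]]]|[d [g [x [K [a E]]]]]]]; rewrite !E.
- exact: fh.
- by apply: leeD; apply: lee_wpmul2l => //; rewrite lee_fin ?subr_ge0.
- apply: ge0_le_integral => //.
  + exact: measurableT_comp mf (mconf _ _ _ _ _).
  + exact: measurableT_comp mh (mconf _ _ _ _ _).
Qed.

Lemma mnterm : measurable [set s : Sig | ~~ terminal s].
Proof.
rewrite (_ : [set s : Sig | ~~ terminal s] = ~` [set s : Sig | terminal s]).
  exact: measurableC mterm.
by apply/seteqP; split => s /=; case: (terminal s).
Qed.

Fixpoint alive n (w : Om) : bool :=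
  match n with
  | 0%N => ~~ terminal (w 0%N : Sig)
  | n'.+1 => alive n' w && ~~ terminal (w n'.+1 : Sig)
  end.

Lemma aliveP n w : alive n w <-> (forall i, (i <= n)%N -> ~~ terminal (w i : Sig)).
Proof.
elim: n => [|n IH] /=.
  by split => [h i|h]; [rewrite leqn0 => /eqP -> | exact: h].
split => [/andP[/IH h1 h2] i|h].
  by rewrite leq_eqVlt => /orP[/eqP -> //|]; rewrite ltnS; exact: h1.
apply/andP; split; last exact: h.
by apply/IH => i hi; apply: h; exact: leqW.
Qed.

Definition Cyl n := [set w : Om | alive n w].

Lemma CylE n : [set w : Om | forall i, (i <= n)%N -> ~~ terminal (w i : Sig)] = Cyl n.
Proof. by apply/seteqP; split => w /= /aliveP. Qed.

Lemma mCyl n : measurable (Cyl n).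
Proof.
elim: n => [|n IH].
  have := mproj 0 measurableT _ mnterm; rewrite setTI; exact.
rewrite (_ : Cyl n.+1 = Cyl n `&` ((fun w : Om => (w n.+1 : Sig)) @^-1` [set s : Sig | ~~ terminal s])).
  apply: measurableI => //; have := mproj n.+1 measurableT _ mnterm; rewrite setTI; exact.
by apply/seteqP; split => w /= /andP.
Qed.

Lemma mcomp_proj n (F : Sig -> \bar R) : measurable_fun setT F ->
  measurable_fun setT (fun w : Om => F (w n : Sig)).
Proof. by move=> mF; exact: measurableT_comp mF (mproj n). Qed.

Lemma mind (B : set Sig) : measurable B -> measurable_fun setT (fun y : Sig => (\1_B y : R)%:E).
Proof. by move=> mB; apply/measurable_EFinP; exact: measurable_indic. Qed.

Variable P : probability Om R.
Hypothesis HM : forall (n : nat) (A : nat -> set Sig) (B : set Sig),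
     (forall i, measurable (A i)) -> measurable B ->
     P [set w : Om | (forall i, (i <= n)%N -> A i (w i)) /\ B (w n.+1)] =
     \int[P]_(w in [set w : Om | forall i, (i <= n)%N -> A i (w i)])
        stepE (w n) (fun s => (\1_B s)%:E).

Lemma KL_ind n (B : set Sig) : measurable B ->
  \int[P]_(w in Cyl n) (\1_B (w n.+1 : Sig))%:E =
  \int[P]_(w in Cyl n) stepE (w n) (fun y => (\1_B y)%:E).
Proof.
move=> mB.
have := HM n (fun _ => [set s : Sig | ~~ terminal s]) B (fun _ => mnterm) mB.
rewrite /= CylE => <-.
have mC := mCyl n.
have mpre : measurable ((fun w : Om => (w n.+1 : Sig)) @^-1` B).
  by have := mproj n.+1 measurableT _ mB; rewrite setTI.
rewrite (eq_integral (fun w => (\1_((fun w : Om => (w n.+1 : Sig)) @^-1` B) w)%:E)); last first.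
  by move=> w _; rewrite !indicE.
rewrite integral_indic //; congr (P _); apply/seteqP; split => w /=.
  by move=> [h1 h2]; split => //; exact/aliveP.
by move=> [h1 h2]; split => //; exact/aliveP.
Qed.

Lemma msumind (I : Type) (s : seq I) (c : I -> R) (B : I -> set Sig) :
  (forall i, measurable (B i)) ->
  measurable_fun setT (fun y : Sig => \sum_(i <- s) (c i)%:E * (\1_(B i) y : R)%:E).
Proof.
move=> mB; apply: emeasurable_sum => i; apply: measurable_funeM; exact: mind.
Qed.

Lemma sumind_ge0 (I : Type) (s : seq I) (c : I -> R) (B : I -> set Sig) :
  (forall i, (0 <= c i)%R) -> forall y : Sig,
  0 <= \sum_(i <- s) (c i)%:E * (\1_(B i) y : R)%:E.
Proof.
move=> c0 y; apply: sume_ge0 => i _; apply: mule_ge0; rewrite lee_fin //.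
Qed.

Lemma KL_sum n (I : Type) (s : seq I) (c : I -> R) (B : I -> set Sig) :
  (forall i, (0 <= c i)%R) -> (forall i, measurable (B i)) ->
  \int[P]_(w in Cyl n) (\sum_(i <- s) (c i)%:E * (\1_(B i) (w n.+1 : Sig) : R)%:E)
  <= \int[P]_(w in Cyl n) stepE (w n) (fun y => \sum_(i <- s) (c i)%:E * (\1_(B i) y : R)%:E).
Proof.
move=> c0 mB; have mC := mCyl n.
elim: s => [|i s IH].
  rewrite (eq_integral (cst 0)); last by move=> w _; rewrite big_nil.
  rewrite integral0; apply: integral_ge0 => w _; apply: stepE_ge0 => y.
  by rewrite big_nil.
pose fi := fun y : Sig => (c i)%:E * (\1_(B i) y : R)%:E.
pose fs := fun y : Sig => \sum_(j <- s) (c j)%:E * (\1_(B j) y : R)%:E.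
have fi0 y : 0 <= fi y.
  by apply: mule_ge0; rewrite lee_fin //; exact: indic_ge0.
have fs0 y : 0 <= fs y by exact: sumind_ge0.
have mfi : measurable_fun setT fi by apply: measurable_funeM; exact: mind.
have mfs : measurable_fun setT fs by exact: msumind.
rewrite (eq_integral (fun w : Om => fi (w n.+1) + fs (w n.+1))); last first.
  by move=> w _; rewrite big_cons.
rewrite [X in _ <= X](eq_integral (fun w : Om => stepE (w n) fi + stepE (w n) fs)); last first.
  move=> w _; rewrite -stepE_add //; congr stepE; apply/funext => y.
  by rewrite big_cons.
rewrite [X in X <= _]ge0_integralD //; last 2 first.
- by apply: (measurable_funS measurableT) => //; exact: mcomp_proj.
- by apply: (measurable_funS measurableT) => //; exact: mcomp_proj.
apply: le_trans (@nm_integralD _ _ _ P (Cyl n) _ _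
   (fun w _ => stepE_ge0 (w n) fi fi0) (fun w _ => stepE_ge0 (w n) fs fs0)).
apply: leeD; last exact: IH.
rewrite ge0_integralZl_EFin //; last first.
  by apply: (measurable_funS measurableT) => //; exact: (mcomp_proj n.+1 _ (mind _ (mB i))).
rewrite KL_ind //.
have i0 : forall y : Sig, 0 <= (\1_(B i) y : R)%:E.
  by move=> y; rewrite lee_fin; exact: indic_ge0.
apply: le_trans (@nm_integralZ _ _ _ P (Cyl n) (c i) _ (c0 i)
   (fun w _ => stepE_ge0 (w n) _ i0)) _.
apply: nm_le_integral.
  by move=> w _; apply: mule_ge0; rewrite ?lee_fin //; exact: stepE_ge0.
move=> w _; rewrite -stepE_scale //.
exact: mind.
Qed.

Lemma KL_nnsfun n (phi : {nnsfun Sig >-> R}) :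
  \int[P]_(w in Cyl n) (phi (w n.+1 : Sig))%:E <=
  \int[P]_(w in Cyl n) stepE (w n) (fun y => (phi y)%:E).
Proof.
set sq := finmap.enum_fset (fset_set (range phi)).
have phiE y : (phi y)%:E = \sum_(i < size sq) (sq`_i)%:E * (\1_(phi @^-1` [set sq`_i]) y : R)%:E.
  by rewrite [in LHS]fimfunEord -sumEFin; apply: eq_bigr => i _; rewrite EFinM.
have c0 (i : 'I_(size sq)) : (0 <= sq`_i)%R.
  have h : sq`_i \in sq by apply: mem_nth.
  have : sq`_i \in range phi by rewrite -(in_fset_set (fimfunP phi)); exact: h.
  by rewrite inE => -[y _ <-]; exact: fun_ge0.
rewrite (eq_integral (fun w : Om => \sum_(i < size sq) (sq`_i)%:E *
    (\1_(phi @^-1` [set sq`_i]) (w n.+1 : Sig) : R)%:E)); last first.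
  by move=> w _; rewrite phiE.
rewrite [X in _ <= X](eq_integral (fun w : Om => stepE (w n) (fun y =>
    \sum_(i < size sq) (sq`_i)%:E * (\1_(phi @^-1` [set sq`_i]) y : R)%:E))); last first.
  by move=> w _; congr stepE; apply/funext => y; rewrite phiE.
apply: (KL_sum n _ (index_enum 'I_(size sq)) (fun i => sq`_i)
   (fun i => phi @^-1` [set sq`_i])) => //.
Qed.

Lemma KL n (g : Sig -> \bar R) : (forall y, 0 <= g y) -> measurable_fun setT g ->
  \int[P]_(w in Cyl n) g (w n.+1 : Sig) <= \int[P]_(w in Cyl n) stepE (w n) g.
Proof.
move=> g0 mg; have mC := mCyl n.
pose phi := nnsfun_approx measurableT mg.
have phig j y : (phi j y)%:E <= g y.
  by rewrite /phi nnsfun_approxE; apply: le_approx => // x _; exact: g0.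
have cvgphi y : (fun j => (phi j y)%:E) @ \oo --> g y.
  exact: (cvg_nnsfun_approx measurableT mg (fun y _ => g0 y)).
have ndphi y a b : (a <= b)%N -> (phi a y <= phi b y)%R.
  by move=> ab; exact/lefP/nd_nnsfun_approx.
have mphi j : measurable_fun setT (fun w : Om => (phi j (w n.+1 : Sig))%:E).
  apply: (mcomp_proj n.+1 (fun y => (phi j y)%:E)); apply/measurable_EFinP; exact: measurable_funPT.
rewrite (eq_integral (fun w : Om => limn (fun j => (phi j (w n.+1 : Sig))%:E))); last first.
  by move=> w _; apply/esym/cvg_lim => //; exact: cvgphi.
rewrite monotone_convergence //; last 3 first.
- by move=> j; apply: (measurable_funS measurableT) => //.
- by move=> j w _; rewrite lee_fin; exact: fun_ge0.
- by move=> w _ a b ab; rewrite lee_fin; exact: ndphi.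
apply: lime_le.
  apply: ereal_nondecreasing_is_cvgn => a b ab; apply: ge0_le_integral => //.
  - by move=> w _; rewrite lee_fin; exact: fun_ge0.
  - by apply: (measurable_funS measurableT) => //.
  - by apply: (measurable_funS measurableT) => //.
  - by move=> w _; rewrite lee_fin; exact: ndphi.
apply: nearW => j.
apply: le_trans (KL_nnsfun n (phi j)) _.
apply: nm_le_integral.
  by move=> w _; apply: stepE_ge0 => y; rewrite lee_fin; exact: fun_ge0.
move=> w _; apply: stepE_le => //.
- by move=> y; rewrite lee_fin; exact: fun_ge0.
- by apply/measurable_EFinP; exact: measurable_funPT.
Qed.

Section Main.
Variables (m : nat) (psi : Sig -> nat -> \bar R) (k : nat).
Hypothesis km : (k <= m)%N.
Hypothesis mpsi : forall q, (q <= m)%N -> measurable_fun setT (fun s : Sig => psi s q).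
Hypothesis psi0 : forall s q, (q <= m)%N -> 0 <= psi s q.
Hypothesis psi1 : forall s, psi s 0%N = 1.
Hypothesis psi3 : forall s, ~~ terminal s ->
  mle m (fun q => stepE s (fun s' => motimes (mones R) (psi s') q)) (psi s).

Fixpoint Phi n (w : Om) : \bar R :=
  match n with
  | 0%N => M 0 (psi (w 0%N)) k
  | n'.+1 => if alive n' w then M n'.+1 (psi (w n'.+1)) k else Phi n' w
  end.

Fixpoint tt n (w : Om) : nat :=
  match n with
  | 0%N => 0%N
  | n'.+1 => if alive n' w then n'.+1 else tt n' w
  end.

Lemma psik s q : (q <= k)%N -> 0 <= psi s q.
Proof. by move=> qk; apply: psi0; exact: leq_trans qk km. Qed.

Lemma M_ge0 t s : 0 <= M t (psi s) k.
Proof.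
apply: sume_ge0 => i _; apply: mule_ge0; first by rewrite lee_fin.
by apply: psik; exact: leq_subr.
Qed.

Lemma mMpsi t n : measurable_fun setT (fun w : Om => M t (psi (w n)) k).
Proof.
apply: emeasurable_sum => i; apply: measurable_funeM.
apply: (mcomp_proj n (fun s => psi s (k - i)%N)); apply: mpsi.
exact: leq_trans (leq_subr _ _) km.
Qed.

Lemma malive n : measurable_fun setT (fun w : Om => alive n w).
Proof. by apply: (measurable_fun_bool true); rewrite setTI; exact: mCyl. Qed.

Lemma mPhi n : measurable_fun setT (Phi n).
Proof.
elim: n => [|n IH] /=; first exact: mMpsi.
apply: measurable_fun_ifT => //; [exact: malive|exact: mMpsi].
Qed.

Lemma Phi_ge0 n w : 0 <= Phi n w.
Proof. by elim: n => [|n IH] /=; [|case: ifP => _ //]; exact: M_ge0. Qed.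

Lemma Phi_Cyl n w : alive n w -> Phi n w = M n (psi (w n)) k.
Proof. by case: n => [|n] //= /andP[-> _]. Qed.

Lemma split_int n (f : Om -> \bar R) : measurable_fun setT f -> (forall w, 0 <= f w) ->
  \int[P]_w f w = \int[P]_(w in Cyl n) f w + \int[P]_(w in ~` Cyl n) f w.
Proof.
move=> mf f0; rewrite -(setUv (Cyl n)) ge0_integral_setU //.
- exact: mCyl.
- exact: measurableC (mCyl n).
- by rewrite setUv.
- by apply/disj_setPCl.
Qed.

Lemma motimes_ge0 q s : (q <= m)%N -> 0 <= motimes (mones R) (psi s) q.
Proof.
move=> qm; apply: sume_ge0 => i _; apply: mule_ge0; first by rewrite lee_fin.
apply: mule_ge0; first exact: lee01.
by apply: psi0; exact: leq_trans (leq_subr _ _) qm.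
Qed.

Lemma mmotimes q : (q <= m)%N -> measurable_fun setT (fun s : Sig => motimes (mones R) (psi s) q).
Proof.
move=> qm; apply: emeasurable_sum => i; apply: measurable_funeM.
apply: measurable_funeM; apply: mpsi; exact: leq_trans (leq_subr _ _) qm.
Qed.

Lemma key n : \int[P]_(w in Cyl n) M n.+1 (psi (w n.+1)) k <=
  \int[P]_(w in Cyl n) M n (psi (w n)) k.
Proof.
have mC := mCyl n.
rewrite (eq_integral (fun w : Om => \sum_(j < k.+1) (('C(k, j) * n ^ j)%:R)%:E *
    motimes (mones R) (psi (w n.+1)) (k - j)%N)); last first.
  by move=> w _; apply: Mstep => q qk; exact: psik.
rewrite ge0_integral_sum //; last 2 first.
- move=> j; apply: measurable_funeM; apply: (measurable_funS measurableT) => //.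
  apply: (mcomp_proj n.+1 (fun s => motimes (mones R) (psi s) (k - j)%N)).
  by apply: mmotimes; exact: leq_trans (leq_subr _ _) km.
- move=> j w _; apply: mule_ge0; first by rewrite lee_fin.
  by apply: motimes_ge0; exact: leq_trans (leq_subr _ _) km.
rewrite /M ge0_integral_sum //; last 2 first.
- move=> j; apply: measurable_funeM; apply: (measurable_funS measurableT) => //.
  apply: (mcomp_proj n (fun s => psi s (k - j)%N)).
  by apply: mpsi; exact: leq_trans (leq_subr _ _) km.
- move=> j w _; apply: mule_ge0; first by rewrite lee_fin.
  by apply: psik; exact: leq_subr.
apply: lee_sum => j _.
have jm : (k - j <= m)%N by exact: leq_trans (leq_subr _ _) km.
rewrite !ge0_integralZl_EFin //; last 4 first.
- by move=> w _; apply: psik; exact: leq_subr.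
- apply: (measurable_funS measurableT) => //.
  by apply: (mcomp_proj n (fun s => psi s (k - j)%N)); exact: mpsi.
- by move=> w _; exact: motimes_ge0.
- apply: (measurable_funS measurableT) => //.
  by apply: (mcomp_proj n.+1 (fun s => motimes (mones R) (psi s) (k - j)%N)); exact: mmotimes.
apply: lee_wpmul2l; first by rewrite lee_fin.
apply: le_trans (KL n (fun s => motimes (mones R) (psi s) (k - j)%N)
  (fun s => motimes_ge0 (k - j)%N s jm) (mmotimes (k - j)%N jm)) _.
apply: nm_le_integral => w /aliveP h.
  by apply: stepE_ge0 => y; exact: motimes_ge0.
exact: (psi3 (w n) (h n (leqnn n)) (k - j)%N jm).
Qed.

Lemma Phi_step n : \int[P]_w Phi n.+1 w <= \int[P]_w Phi n w.
Proof.
rewrite (split_int n _ (mPhi n.+1) (Phi_ge0 n.+1)) (split_int n _ (mPhi n) (Phi_ge0 n)).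
apply: leeD.
  rewrite (eq_integral (fun w : Om => M n.+1 (psi (w n.+1)) k)); last first.
    by move=> w; rewrite inE /= => ->.
  rewrite [X in _ <= X](eq_integral (fun w : Om => M n (psi (w n)) k)); last first.
    by move=> w; rewrite inE => h; exact: Phi_Cyl.
  exact: key.
rewrite [X in X <= _](eq_integral (Phi n)) //.
by move=> w; rewrite inE /= => /negP h; rewrite (negbTE h).
Qed.

Lemma M0 (v : nat -> \bar R) : M 0 v k = v k.
Proof.
rewrite /M big_ord_recl big1 ?adde0; last first.
  by move=> i _; rewrite exp0n // muln0 mul0e.
by rewrite bin0 expn0 muln1 mul1e subn0.
Qed.

Lemma Phi_le n : \int[P]_w Phi n w <= \int[P]_w psi (w 0%N) k.
Proof.
elim: n => [|n IH].
  rewrite [X in X <= _](eq_integral (fun w : Om => psi (w 0%N) k)) //.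
  by move=> w _ /=; rewrite M0.
exact: le_trans (Phi_step n) IH.
Qed.

Lemma M_ge_pow t s : ((t ^ k)%:R)%:E <= M t (psi s) k.
Proof.
rewrite /M big_ord_recr /= subnn psi1 mule1 binn mul1n.
apply: lee_paddl; last exact: lexx.
apply: sume_ge0 => i _; apply: mule_ge0; first by rewrite lee_fin.
by apply: psik; exact: leq_subr.
Qed.

Lemma tt_le_Phi n w : ((tt n w ^ k)%:R)%:E <= Phi n w.
Proof.
elim: n => [|n IH] /=; first exact: M_ge_pow.
by case: ifP => _ //; exact: M_ge_pow.
Qed.

Lemma mtt n : measurable_fun setT (fun w : Om => ((tt n w ^ k)%:R)%:E : \bar R).
Proof.
elim: n => [|n IH] /=; first exact: measurable_cst.
rewrite (_ : (fun w : Om => _) = (fun w : Om => if alive n w then ((n.+1 ^ k)%:R)%:E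
   else ((tt n w ^ k)%:R)%:E)); last by apply/funext => w; case: ifP.
apply: measurable_fun_ifT => //; exact: malive.
Qed.

Lemma tt_le n w : (tt n w <= n)%N.
Proof. elim: n => [|n IH] //=; case: ifP => // _; exact: leq_trans IH (leqnSn n). Qed.

Lemma tt_nd n w : (tt n w <= tt n.+1 w)%N.
Proof. by rewrite /=; case: ifP => // _; exact: leq_trans (tt_le n w) (leqnSn n). Qed.

Lemma tt_cvg w : ((tt n w ^ k)%:R)%:E @[n --> \oo] --> stopT w ^+ k.
Proof.
case: (pselect (exists j, terminal (w j : Sig))) => [ex|nex].
  case: (ex_minnP ex) => j0 tj0 minj0.
  have aliveE n : alive n w = (n < j0)%N.
    apply/idP/idP.
      move/aliveP => h; rewrite ltnNge; apply/negP => jn.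
      by move: (h j0 jn); rewrite tj0.
    move=> nj; apply/aliveP => i iin; apply/negP => ti.
    by move: (minj0 i ti); rewrite leqNgt (leq_ltn_trans iin nj).
  have ttE n : tt n w = minn n j0.
    elim: n => [|n IH] /=; first by rewrite min0n.
    rewrite aliveE; case: ltnP => h.
      by rewrite (minn_idPl h).
    by rewrite IH (minn_idPr h) (minn_idPr (leq_trans h (leqnSn n))).
  have stopE : stopT w = (j0%:R)%:E.
    apply/eqP; rewrite eq_le; apply/andP; split.
      by apply: ereal_inf_le; exists (j0%:R)%:E => //; exists j0.
    by apply: le_ereal_inf_tmp => _ [i ti <-]; rewrite lee_fin ler_nat; exact: minj0.
  rewrite stopE -EFin_expe -natrX; apply: cvg_near_cst.
  near=> n; rewrite ttE (minn_idPr _) //.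
  by near: n; exists j0.
have allal n : alive n w.
  by apply/aliveP => i _; apply/negP => ti; apply: nex; exists i.
have ttE n : tt n w = n by elim: n => [|n IH] //=; rewrite allal.
have stopE : stopT w = +oo.
  rewrite /stopT (_ : [set _ | _ in _] = set0) ?ereal_inf0 //.
  by apply/seteqP; split => // y [i ti _]; apply: nex; exists i.
rewrite stopE; case: k => [|k'].
  rewrite expe0; apply: cvg_near_cst; by near=> n; rewrite expn0.
rewrite pinfty_pow; apply: (@gee_cvgy _ _ _ _ (fun n => (n%:R)%:E)).
  near=> n; rewrite ttE lee_fin ler_nat.
  by rewrite -{1}(expn1 n) leq_pexp2l //; near: n; exists 1%N.
by apply/cvgenyP.
Unshelve. all: by end_near.
Qed.

Lemma tt_mono a b w : (a <= b)%N -> (tt a w <= tt b w)%N.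
Proof.
elim: b => [|b IH]; first by rewrite leqn0 => /eqP ->.
rewrite leq_eqVlt => /orP[/eqP -> //|]; rewrite ltnS => ab.
exact: leq_trans (IH ab) (tt_nd b w).
Qed.

Lemma powk_mono a b : (a <= b)%N -> (a ^ k <= b ^ k)%N.
Proof.
case: (posnP k) => [->|kp ab]; first by rewrite !expn0.
by rewrite leq_exp2r.
Qed.

Lemma main_k : \int[P]_w (stopT w ^+ k) <= \int[P]_w psi (w 0%N) k.
Proof.
rewrite (eq_integral (fun w : Om => limn (fun n => ((tt n w ^ k)%:R)%:E : \bar R))); last first.
  by move=> w _; apply/esym/cvg_lim => //; exact: tt_cvg.
rewrite monotone_convergence //; last 2 first.
- by move=> n; exact: mtt.
- move=> w _ a b ab; rewrite lee_fin ler_nat; apply: powk_mono; exact: tt_mono.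
apply: lime_le.
  apply: ereal_nondecreasing_is_cvgn => a b ab; apply: ge0_le_integral => //.
  - exact: mtt.
  - exact: mtt.
  - move=> w _; rewrite lee_fin ler_nat; apply: powk_mono; exact: tt_mono.
apply: nearW => n.
apply: le_trans (Phi_le n).
apply: ge0_le_integral => //.
- exact: mtt.
- exact: mPhi.
- by move=> w _; exact: tt_le_Phi.
Qed.

End Main.
End P.

Theorem theoremG2 (R : realType) (VID FID : finType) (Dst : Type)
    (muD : Dst -> probability R R)
    (D : FID -> Stmt R VID FID Dst) (Smain : Stmt R VID FID Dst)
    (P : probability (Omega R VID FID Dst) R)
    (m : nat) (psi : Sigma R VID FID Dst -> nat -> \bar R) :
  markov_law D muD Smain P ->
  expected_potential_ub D muD m psi ->
  mle m (fun k => \int[P]_w (stopT w ^+ k))      (* E[A_T] *)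
        (fun k => \int[P]_w psi (w 0%N) k).       (* E[Psi_0] *)
Proof.
move=> [_ HM] [mpsi psi0 psi1 _ psi3] k km.
exact: (@main_k R VID FID Dst muD D P HM m psi k km mpsi psi0 psi1 psi3).
Qed.
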